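(* Suppose the Drift Assumption holds and let $1<p\le2$. Define $\Psi(x)=\Phi(x)^{p/2}$. Then $\Psi$ is differentiable (with $\nabla\Psi(0)=0$), and there exist constants $\eta_p,L_p>0$ such that, with $a_1=c_1^{p/2}$, $a_2=c_2^{p/2}$, for all $x,y\in\mathbb{R}^d$: (1) $a_1\|x-x^\star\|^p\le\Psi(x-x^\star)\le a_2\|x-x^\star\|^p$; (2) $\langle\nabla\Psi(x-x^\star),H(x)-x\rangle\le-\eta_p\Psi(x-x^\star)$ (one can take $\eta_p=\tfrac p2\eta$); (3) $\Psi(x)\le\Psi(y)+\langle\nabla\Psi(y),x-y\rangle+\frac{L_p}{p}\|x-y\|^p$.
   Context: Let $\|\cdot\|$ denote the Euclidean norm on $\mathbb{R}^d$ and $\langle\cdot,\cdot\rangle$ the Euclidean inner product; $H:\mathbb{R}^d\to\mathbb{R}^d$. Drift Assumption: there is $x^\star\in\mathbb{R}^d$ with $H(x^\star)=x^\star$, a differentiable function $\Phi:\mathbb{R}^d\to[0,\infty)$ and constants $\eta,c_1,c_2,L_2>0$ such that (i) $\langle\nabla\Phi(x-x^\star),H(x)-x\rangle\le-\eta\,\Phi(x-x^\star)$ for all $x\in\mathbb{R}^d$; (ii) $\Phi(y)\le\Phi(x)+\langle\nabla\Phi(x),y-x\rangle+\frac{L_2}{2}\|y-x\|^2$ for all $x,y\in\mathbb{R}^d$; (iii) $c_1\|x-x^\star\|^2\le\Phi(x-x^\star)\le c_2\|x-x^\star\|^2$ for all $x\in\mathbb{R}^d$. *)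

(* Defs.v *)
(* R^d is modelled as row vectors 'rV[R]_d. *)
From HB Require Import structures.
From mathcomp Require Import all_boot all_order all_algebra.
From mathcomp Require Import all_classical all_reals all_analysis.
Set Implicit Arguments. Unset Strict Implicit. Unset Printing Implicit Defensive.
Import Order.TTheory GRing.Theory Num.Theory.
Import numFieldNormedType.Exports.
Local Open Scope ring_scope.

Definition dotp (R : realType) (d : nat) (u v : 'rV[R]_d) : R :=
  \sum_(i < d) u ord0 i * v ord0 i.

Definition enorm (R : realType) (d : nat) (u : 'rV[R]_d) : R :=
  Num.sqrt (dotp u u).

Definition grad (R : realType) (d : nat) (f : 'rV[R]_d -> R) (x : 'rV[R]_d)
  : 'rV[R]_d := \row_(i < d) ('d f x (delta_mx ord0 i : 'rV[R]_d)).

(* Main.v *)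
Require Import Defs.
From HB Require Import structures.
From mathcomp Require Import all_boot all_order all_algebra.
From mathcomp Require Import all_classical all_reals all_analysis.
From mathcomp Require Import ring lra.
Import Order.TTheory GRing.Theory Num.Theory.
Import numFieldNormedType.Exports.
Local Open Scope ring_scope.

Section Dot.
Variables (R : realType) (d : nat).
Implicit Types u v w : 'rV[R]_d.

Lemma dotpC u v : dotp u v = dotp v u.
Proof. by apply: eq_bigr => i _; rewrite mulrC. Qed.
Lemma dotpDl u v w : dotp (u + v) w = dotp u w + dotp v w.
Proof. by rewrite /dotp -big_split; apply: eq_bigr => i _; rewrite mxE mulrDl. Qed.
Lemma dotpZl a u v : dotp (a *: u) v = a * dotp u v.
Proof. by rewrite /dotp mulr_sumr; apply: eq_bigr => i _; rewrite mxE mulrA. Qed.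
Lemma dotpNl u v : dotp (- u) v = - dotp u v.
Proof. by rewrite -scaleN1r dotpZl mulN1r. Qed.
Lemma dotpZr a u v : dotp u (a *: v) = a * dotp u v.
Proof. by rewrite dotpC dotpZl dotpC. Qed.
Lemma dotpDr u v w : dotp u (v + w) = dotp u v + dotp u w.
Proof. by rewrite dotpC dotpDl !(dotpC u). Qed.
Lemma dotpNr u v : dotp u (- v) = - dotp u v.
Proof. by rewrite dotpC dotpNl dotpC. Qed.
Lemma dotp0r u : dotp u 0 = 0.
Proof. by rewrite /dotp big1 // => i _; rewrite mxE mulr0. Qed.
Lemma dotp0l u : dotp 0 u = 0.
Proof. by rewrite dotpC dotp0r. Qed.
Lemma dotpp_ge0 u : 0 <= dotp u u.
Proof. by apply: sumr_ge0 => i _; rewrite -expr2 sqr_ge0. Qed.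
Lemma enorm_ge0 u : 0 <= enorm u.
Proof. exact: sqrtr_ge0. Qed.
Lemma enorm_sqr u : enorm u ^+ 2 = dotp u u.
Proof. by rewrite sqr_sqrtr // dotpp_ge0. Qed.
Lemma dotpp_eq0 u : dotp u u = 0 -> u = 0.
Proof.
move=> /eqP; rewrite psumr_eq0; last by move=> i _; rewrite -expr2 sqr_ge0.
move=> /allP H; apply/rowP => i; rewrite mxE.
have := H i (mem_index_enum _); rewrite /= mulf_eq0 orbb => /eqP //.
Qed.
Lemma enorm_eq0 u : enorm u = 0 -> u = 0.
Proof. by move=> h; apply: dotpp_eq0; rewrite -enorm_sqr h expr0n. Qed.
Lemma enormN u : enorm (- u) = enorm u.
Proof. by rewrite /enorm dotpNl dotpNr opprK. Qed.
Lemma enorm0 : enorm (0 : 'rV[R]_d) = 0.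
Proof. by rewrite /enorm dotp0l sqrtr0. Qed.

Lemma CS u v : dotp u v <= enorm u * enorm v.
Proof.
have [a0|] := eqVneq (enorm u) 0.
  by rewrite a0 mul0r (enorm_eq0 _ a0) dotp0l.
have [b0|] := eqVneq (enorm v) 0.
  by rewrite b0 mulr0 (enorm_eq0 _ b0) dotp0r.
move=> bn an.
have a0 : 0 < enorm u by rewrite lt_def an enorm_ge0.
have b0 : 0 < enorm v by rewrite lt_def bn enorm_ge0.
set a := enorm u in a0 an *; set b := enorm v in b0 bn *.
have := dotpp_ge0 (b *: u - a *: v).
rewrite dotpDl !dotpDr !dotpNl !dotpNr !dotpZl !dotpZr -!enorm_sqr -/a -/b (dotpC v u).
move=> h.
have hab : 0 < a * b by rewrite mulr_gt0.
rewrite -(ler_pM2l hab). nra.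
Qed.

Lemma CSabs u v : `|dotp u v| <= enorm u * enorm v.
Proof.
rewrite ler_norml CS andbT -(enormN u) lerNl -dotpNl; exact: CS.
Qed.
End Dot.
Arguments enorm_ge0 {R d}.


Section Pow.
Variable R : realType.
Implicit Types q s t u a b e n r : R.

Lemma bernoulli q u : 0 < q <= 1 -> 0 <= u -> u `^ q <= 1 + q * (u - 1).
Proof.
move=> /andP[q0 q1] u0.
have [->|qn1] := eqVneq q 1; first by rewrite powRr1 // mul1r; lra.
have q1' : q < 1 by rewrite lt_neqAle qn1 q1.
have := @conjugate_powR R (u `^ q) 1 (q^-1) ((1 - q)^-1) (powR_ge0 _ _) ler01.
rewrite invr_gt0 q0 invr_gt0 subr_gt0 q1' !invrK => /(_ isT isT).
rewrite -powRrM mulfV ?gt_eqF // powRr1 // powR1 mulr1.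
move=> /(_ ltac:(ring)).
move=> h; apply: le_trans h _; lra.
Qed.

Lemma pow_concave q s t : 0 < q <= 1 -> 0 <= s -> 0 < t ->
  s `^ q <= t `^ q + q * t `^ (q - 1) * (s - t).
Proof.
move=> /andP[q0 q1] s0 t0.
have st : s = t * (s / t) by field; rewrite gt_eqF.
have e1 : s `^ q = t `^ q * (s / t) `^ q.
  rewrite {1}st powRM //; first exact: ltW.
  by apply: divr_ge0 => //; apply: ltW.
have e2 : t * t `^ (q - 1) = t `^ q by rewrite mulr_powRB1 // ltW.
have e3 : t `^ q + q * t `^ (q - 1) * (s - t) = t `^ q * (1 + q * (s / t - 1)).
  by rewrite -e2; field; rewrite gt_eqF.
rewrite e1 e3 ler_pM2l ?powR_gt0 //.
by apply: bernoulli; rewrite ?q0 ?q1 // divr_ge0 // ltW.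
Qed.

Lemma sqpow e r : 0 <= e -> (e ^+ 2) `^ r = e `^ (2 * r).
Proof. by move=> e0; rewrite -powR_mulrn // -powRrM. Qed.

Lemma powsq e r : (e `^ r) ^+ 2 = e `^ (r * 2).
Proof. by rewrite -powR_mulrn ?powR_ge0 // -powRrM. Qed.

Lemma anti_pow a b r : 0 < a -> a <= b -> r <= 0 -> b `^ r <= a `^ r.
Proof.
move=> a0 ab r0; have b0 : 0 < b := lt_le_trans a0 ab.
have -> : r = - (- r) by rewrite opprK.
rewrite !(powRN _ (- r)) lef_pV2 ?posrE ?powR_gt0 //.
by apply: ge0_ler_powR; rewrite ?nnegrE ?oppr_ge0 // ltW.
Qed.

Lemma powRD' n r s : 0 < n -> n `^ r * n `^ s = n `^ (r + s).
Proof. by move=> n0; rewrite powRD //; apply/implyP => _; rewrite gt_eqF. Qed.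

Lemma powsq2 n r : 0 < n -> n `^ r * n ^+ 2 = n `^ (r + 2).
Proof. by move=> n0; rewrite -powR_mulrn ?ltW // powRD'. Qed.

Lemma sq_le a b : 0 <= b -> a ^+ 2 <= b ^+ 2 -> a <= b.
Proof. move=> b0 h; rewrite !expr2 in h; nra. Qed.

End Pow.


Definition Kc (R : realType) (c2 L2 : R) := c2 + Num.sqrt (2 * L2 * c2) + L2 / 2.
Arguments Kc {R}.
Definition Cst (R : realType) (q c1 c2 L2 : R) :=
  c2 `^ q + q * c1 `^ (q - 1) * (L2 / 2) + (Kc c2 L2) `^ q
  + q * Num.sqrt (2 * L2 * c2 `^ (2 * q - 1)).
Arguments Cst {R}.

Lemma key_real (R : realType) (q c1 c2 L2 t s e n G g : R) :
  2^-1 < q -> q <= 1 -> 0 < c1 -> 0 < c2 -> 0 < L2 -> 0 < t -> 0 <= s ->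
  0 <= e -> 0 <= n -> 0 <= g ->
  c1 * e ^+ 2 <= t -> t <= c2 * e ^+ 2 -> s <= t + G + L2 / 2 * n ^+ 2 ->
  g ^+ 2 <= 2 * L2 * t -> `|G| <= g * n ->
  s `^ q <= t `^ q + q * t `^ (q - 1) * G + Cst q c1 c2 L2 * n `^ (2 * q).
Proof.
move=> q12 q1 c10 c20 L20 t0 s0 e0 n0 g0 c1t tc2 sb gb Gb.
have q0 : 0 < q by apply: lt_trans q12; rewrite invr_gt0.
have q0w := ltW q0; have c10w := ltW c10; have c20w := ltW c20.
have L20w := ltW L20; have t0w := ltW t0.
set k := q * t `^ (q - 1).
have k0 : 0 < k by rewrite mulr_gt0 // powR_gt0.
set P := n `^ (2 * q).
have P0 : 0 <= P := powR_ge0 _ _.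
set A1 := c2 `^ q.
set A2 := q * c1 `^ (q - 1).
set A3 := (Kc c2 L2) `^ q.
set A4 := q * Num.sqrt (2 * L2 * c2 `^ (2 * q - 1)).
have A10 : 0 <= A1 := powR_ge0 _ _.
have A20 : 0 <= A2 by rewrite mulr_ge0 ?powR_ge0 // ltW.
have A30 : 0 <= A3 := powR_ge0 _ _.
have A40 : 0 <= A4 by rewrite mulr_ge0 ?sqrtr_ge0 // ltW.
have -> : Cst q c1 c2 L2 * P = A1 * P + A2 * (L2 / 2) * P + A3 * P + A4 * P.
  by rewrite /Cst -/A1 -/A3; rewrite /A2 /A4; ring.
have A1P : 0 <= A1 * P by apply: mulr_ge0.
have A3P : 0 <= A3 * P by apply: mulr_ge0.
have A4P : 0 <= A4 * P by apply: mulr_ge0.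
have L22 : 0 <= L2 / 2 by lra.
have A2P : 0 <= A2 * (L2 / 2) * P by rewrite mulr_ge0 // mulr_ge0.
have tq0 : 0 <= t `^ q := powR_ge0 _ _.
have [ne|en] := leP n e.
-
  have hc := @pow_concave R q s t ltac:(by rewrite q0 q1) s0 t0.
  have h1 : k * (s - t) <= k * G + k * n ^+ 2 * (L2 / 2).
    have : s - t <= G + L2 / 2 * n ^+ 2 by lra.
    move=> h; rewrite -mulrA -mulrDr; apply: ler_wpM2l; first exact: ltW.
    by rewrite [n ^+ 2 * _]mulrC.
  have h2 : k * n ^+ 2 <= A2 * P.
    have [->|nn0] := eqVneq n 0.
      by rewrite expr0n /= mulr0; apply: mulr_ge0.
    have np : 0 < n by rewrite lt_def nn0 n0.
    have cn : 0 < c1 * n ^+ 2 by rewrite mulr_gt0 // exprn_gt0.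
    have cnt : c1 * n ^+ 2 <= t.
      apply: le_trans c1t; rewrite ler_wpM2l ?q0w ?c10w ?c20w ?L20w ?t0w //.
      by rewrite lerXn2r ?nnegrE.
    have := @anti_pow R _ _ (q - 1) cn cnt ltac:(lra).
    rewrite powRM ?q0w ?c10w ?c20w ?L20w ?t0w ?sqr_ge0 // sqpow ?q0w ?c10w ?c20w ?L20w ?t0w // => hh.
    rewrite /k /A2 -!mulrA ler_wpM2l ?q0w ?c10w ?c20w ?L20w ?t0w //.
    have e1 : c1 `^ (q - 1) * P = c1 `^ (q - 1) * n `^ (2 * (q - 1)) * n ^+ 2.
      by rewrite -mulrA powsq2 // /P; congr (_ * _ `^ _); ring.
    rewrite e1 ler_wpM2r ?sqr_ge0 //.
  have h3 : k * n ^+ 2 * (L2 / 2) <= A2 * (L2 / 2) * P.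
    rewrite [X in _ <= X]mulrAC ler_wpM2r // divr_ge0 // ltW //.
  rewrite -/k in hc; lra.
-
  have S1 := sqrtr_ge0 (2 * L2 * c2).
  have gS : g <= Num.sqrt (2 * L2 * c2) * n.
    apply: sq_le; first by rewrite mulr_ge0.
    rewrite exprMn sqr_sqrtr; last by rewrite !mulr_ge0 // ltW.
    apply: (le_trans gb); rewrite -!mulrA !ler_wpM2l // ?q0w ?c10w ?c20w ?L20w ?t0w //.
    apply: (le_trans tc2); rewrite ler_wpM2l ?q0w ?c10w ?c20w ?L20w ?t0w //.
    by rewrite lerXn2r ?nnegrE // ltW.
  have Gg : `|G| <= Num.sqrt (2 * L2 * c2) * n * n.
    by apply: (le_trans Gb); rewrite ler_wpM2r.
  have sK : s <= Kc c2 L2 * n ^+ 2.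
    have ee : c2 * e ^+ 2 <= c2 * n ^+ 2.
      by rewrite ler_wpM2l ?q0w ?c10w ?c20w ?L20w ?t0w // lerXn2r ?nnegrE // ltW.
    have := ler_norm G.
    rewrite /Kc; move: Gg ee; rewrite !expr2; lra.
  have sq : s `^ q <= A3 * P.
    rewrite /A3 /P -sqpow // -powRM ?sqr_ge0 //; last first.
      by rewrite /Kc !addr_ge0 ?sqrtr_ge0 ?divr_ge0 ?q0w ?c10w ?c20w ?L20w ?t0w.
    by apply: ge0_ler_powR; rewrite ?nnegrE ?q0w ?c10w ?c20w ?L20w ?t0w // mulr_ge0 ?sqr_ge0 // /Kc
      !addr_ge0 ?sqrtr_ge0 ?divr_ge0 ?q0w ?c10w ?c20w ?L20w ?t0w.
  have np : 0 < n by apply: le_lt_trans en.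
  have kg : k * g <= A4 * n `^ (2 * q - 1).
    apply: sq_le; first by rewrite mulr_ge0 ?powR_ge0.
    have tq : t `^ (2 * q - 1) <= c2 `^ (2 * q - 1) * n `^ (2 * (2 * q - 1)).
      rewrite -sqpow ?q0w ?c10w ?c20w ?L20w ?t0w // -powRM ?q0w ?c10w ?c20w ?L20w ?t0w ?sqr_ge0 //.
      apply: ge0_ler_powR; rewrite ?nnegrE ?mulr_ge0 ?sqr_ge0 ?q0w ?c10w ?c20w ?L20w ?t0w //; first lra.
      apply: (le_trans tc2); rewrite ler_wpM2l ?q0w ?c10w ?c20w ?L20w ?t0w //.
      by rewrite lerXn2r ?nnegrE // ltW.
    have lhs : (k * g) ^+ 2 <= q ^+ 2 * (2 * L2) * t `^ (2 * q - 1).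
      rewrite exprMn /k exprMn powsq.
      have : t `^ ((q - 1) * 2) * t = t `^ (2 * q - 1).
        rewrite -{2}(powRr1 (ltW t0)) powRD' //; congr (_ `^ _); ring.
      move=> ht.
      have tp : 0 <= t `^ ((q - 1) * 2) := powR_ge0 _ _.
      rewrite -ht -!mulrA ler_wpM2l ?sqr_ge0 //.
      apply: ler_wpM2l => //; apply: (le_trans (ler_wpM2l tp gb)).
      by rewrite le_eqVlt; apply/orP; left; apply/eqP; ring.
    apply: (le_trans lhs).
    rewrite /A4 exprMn exprMn sqr_sqrtr ?mulr_ge0 ?powR_ge0 ?q0w ?c10w ?c20w ?L20w ?t0w //.
    rewrite powsq -!mulrA ler_wpM2l ?sqr_ge0 // ler_wpM2l ?mulr_ge0 ?q0w ?c10w ?c20w ?L20w ?t0w //.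
    rewrite ler_wpM2l // ler_wpM2l //; apply: (le_trans tq).
    by rewrite [(2 * q - 1) * 2]mulrC.
  have kG : - (k * G) <= A4 * P.
    have : - (k * G) <= k * g * n.
      rewrite -mulrA -mulrN ler_wpM2l ?(ltW k0) //.
      by apply: le_trans (ler_norm (- G)) _; rewrite normrN.
    move=> h; apply: (le_trans h).
    have -> : P = n `^ (2 * q - 1) * n.
      rewrite -{2}(powRr1 n0) powRD' //; congr (_ `^ _); ring.
    by rewrite mulrA ler_wpM2r.
  lra.
Qed.

Lemma diff_pos (R : realType) d (Phi : 'rV[R]_d -> R) q y :
  0 < Phi y -> differentiable Phi y ->
  differentiable (fun x => Phi x `^ q) y /\
  forall v, 'd (fun x => Phi x `^ q) y v = q * Phi y `^ (q - 1) * 'd Phi y v.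
Proof.
move=> Py dP.
have dp : differentiable (@powR R ^~ q) (Phi y).
  by apply/derivable1_diffP; apply: derivable_powR; rewrite in_itv /= Py.
have -> : (fun x => Phi x `^ q) = (@powR R ^~ q) \o Phi by [].
split; first exact: differentiable_comp.
move=> v; rewrite diff_comp // /= diff1E // powR_derive1; last by rewrite in_itv /= Py.
exact: mulrC.
Qed.

Lemma coord_le (R : realType) d (h : 'rV[R]_d) i : `|h ord0 i| <= `|h|.
Proof.
rewrite [X in _ <= X]mx_normrE.
exact: (le_bigmax _ (fun ij : 'I_1 * 'I_d => `|h ij.1 ij.2|) (ord0, i)).
Qed.

Lemma enorm_le (R : realType) d (h : 'rV[R]_d) : enorm h ^+ 2 <= d%:R * `|h| ^+ 2.
Proof.
rewrite sqr_sqrtr; last by apply: sumr_ge0 => i _; rewrite -expr2 sqr_ge0.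
rewrite /dotp mulr_natl -[X in _ *+ X]card_ord -sumr_const.
apply: ler_sum => i _; rewrite -expr2 -real_normK ?num_real //.
by rewrite lerXn2r ?nnegrE ?normr_ge0 ?coord_le.
Qed.

Lemma diff_zero (R : realType) d (Phi : 'rV[R]_d -> R) q c2 :
  2^-1 < q -> 0 <= c2 -> (forall x, 0 <= Phi x) -> Phi 0 = 0 ->
  (forall h, Phi h <= c2 * enorm h ^+ 2) ->
  differentiable (fun x => Phi x `^ q) 0 /\ forall v, 'd (fun x => Phi x `^ q) 0 v = 0.
Proof.
move=> q12 c20 P0 Phi0 Pb.
set Psi := fun x => Phi x `^ q.
have q0 : 0 < q by apply: lt_trans q12; rewrite invr_gt0.
have Psi0 : Psi 0 = 0 by rewrite /Psi Phi0 powR0 // gt_eqF.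
have L : forall eps : R, 0 < eps -> \forall h \near (0 : 'rV[R]_d), `|Psi h| <= eps * `|h|.
  move=> eps eps0.
  set C := (c2 * (d%:R + 1)) `^ q + 1.
  have C0 : 0 < C by rewrite /C ltr_wpDl ?powR_ge0.
  set r := 2 * q - 1.
  have r0 : 0 < r by rewrite /r subr_gt0 -ltr_pdivrMl // mulrC mul1r.
  set del := (eps / C) `^ (r^-1).
  have del0 : 0 < del by rewrite powR_gt0 // divr_gt0.
  apply: filterS (nbhs0_lt del0) => h hh.
  rewrite ger0_norm ?powR_ge0 //.
  set m := `|h|.
  have m0 : 0 <= m by apply: normr_ge0.
  have b1 : Psi h <= (c2 * (d%:R + 1)) `^ q * m `^ (2 * q).
    rewrite /Psi mulrC powRrM powR_mulrn // -powRM ?mulr_ge0 ?ler0n ?addr_ge0 //.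
    apply: ge0_ler_powR; rewrite ?nnegrE ?P0 ?mulr_ge0 ?addr_ge0 ?ler0n ?sqr_ge0 ?(ltW q0) //.
    apply: (le_trans (Pb h)); rewrite [X in _ <= X]mulrC -mulrA ler_wpM2l //.
    have hle := @enorm_le _ _ h; rewrite -/m in hle.
    have := sqr_ge0 m; nra.
  apply: (le_trans b1).
  have [->|mpos] := eqVneq m 0.
    by rewrite powR0 ?mulr0 // mulf_neq0 // gt_eqF.
  have mp : 0 < m by rewrite lt_def mpos m0.
  have e2 : m `^ (2 * q) = m `^ r * m.
    rewrite -{3}(powRr1 m0) -powRD; first by congr (_ `^ _); rewrite /r; ring.
    by rewrite mpos implybT.
  have e3 : m `^ r <= eps / C.
    have -> : eps / C = del `^ r.
      by rewrite /del -powRrM mulVf ?gt_eqF // powRr1 // ltW // divr_gt0.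
    by apply: ge0_ler_powR; rewrite ?nnegrE ?ltW.
  rewrite e2 mulrA ler_wpM2r //.
  have : (c2 * (d%:R + 1)) `^ q <= C by rewrite /C lerDl.
  move: e3; set A := (c2 * (d%:R + 1)) `^ q; set B := m `^ r => e3 hA.
  have A0 : 0 <= A by apply: powR_ge0.
  have B0 : 0 <= B by apply: powR_ge0.
  have : A * B <= C * (eps / C) by apply: ler_pM.
  by rewrite mulrCA divff ?gt_eqF // mulr1.
have E : 'd Psi 0 = \0 :> ('rV[R]_d -> R).
  apply: diff_unique; first by have [] := dcst (0:R) (0:'rV[R]_d).
  apply/eqaddoP => eps eps0; apply: filterS (L eps eps0) => h.
  by rewrite (_ : (_ - _) h = Psi h) //;
    change (Psi (h + 0) - (Psi 0 + 0) = Psi h); rewrite addr0 Psi0 addr0 subr0.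
split; last by move=> v; rewrite E.
apply/diff_locallyP; rewrite E; split; first by have [] := dcst (0:R) (0:'rV[R]_d).
apply/eqaddoP => eps eps0; apply: filterS (L eps eps0) => h.
by rewrite (_ : (_ - _) h = Psi h) //;
  change (Psi (h + 0) - (Psi 0 + 0) = Psi h); rewrite addr0 Psi0 addr0 subr0.
Qed.

Theorem proposition2 (R : realType) (d : nat)
  (H : 'rV[R]_d -> 'rV[R]_d) (xstar : 'rV[R]_d) (Phi : 'rV[R]_d -> R)
  (eta c1 c2 L2 p : R) :
  H xstar = xstar ->
  (forall x, 0 <= Phi x) ->
  (forall x, differentiable Phi x) ->
  0 < eta -> 0 < c1 -> 0 < c2 -> 0 < L2 ->
  (forall x, dotp (grad Phi (x - xstar)) (H x - x) <= - eta * Phi (x - xstar)) ->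
  (forall x y, Phi y <= Phi x + dotp (grad Phi x) (y - x)
                        + L2 / 2 * enorm (y - x) ^+ 2) ->
  (forall x, c1 * enorm (x - xstar) ^+ 2 <= Phi (x - xstar)
             /\ Phi (x - xstar) <= c2 * enorm (x - xstar) ^+ 2) ->
  1 < p -> p <= 2 ->
  let Psi := fun x => Phi x `^ (p / 2) in
  let a1 := c1 `^ (p / 2) in
  let a2 := c2 `^ (p / 2) in
  (forall x, differentiable Psi x) /\ grad Psi 0 = 0 /\
  exists eta_p L_p : R,
    [/\ 0 < eta_p, 0 < L_p, eta_p = p / 2 * eta &
    forall x y,
      [/\ a1 * enorm (x - xstar) `^ p <= Psi (x - xstar)
          /\ Psi (x - xstar) <= a2 * enorm (x - xstar) `^ p,
        dotp (grad Psi (x - xstar)) (H x - x) <= - eta_p * Psi (x - xstar) &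
        Psi x <= Psi y + dotp (grad Psi y) (x - y) + L_p / p * enorm (x - y) `^ p]].
Proof.
move=> Hfix Pge0 Pdiff eta0 c10 c20 L20 Hdrift Hsmooth Hquad p1 p2 Psi a1 a2.
set q := p / 2 in Psi a1 a2 *.
have q12 : 2^-1 < q by rewrite /q; lra.
have q1 : q <= 1 by rewrite /q; lra.
have q0 : 0 < q by rewrite /q; lra.
have p2q : 2 * q = p by rewrite /q; field.
have p0w : 0 <= p by lra.
have Phib z : c1 * enorm z ^+ 2 <= Phi z /\ Phi z <= c2 * enorm z ^+ 2.
  by have := Hquad (z + xstar); rewrite addrK.
have Phi0 : Phi 0 = 0.
  apply/le_anti; rewrite Pge0 andbT.
  by have := (Phib 0).2; rewrite enorm0 expr0n mulr0.
have PhiZ y : Phi y = 0 -> y = 0.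
  move=> Py; have := (Phib y).1; rewrite Py => h.
  apply: enorm_eq0; apply/eqP; rewrite -sqrf_eq0; apply/eqP.
  have := sqr_ge0 (enorm y); nra.
have DZ := @diff_zero R d Phi q c2 q12 (ltW c20) Pge0 Phi0 (fun h => (Phib h).2).
have gradlem y : (y = 0 /\ Phi y = 0 /\ grad Psi y = 0) \/
    (0 < Phi y /\ grad Psi y = (q * Phi y `^ (q - 1)) *: grad Phi y).
  have [Py0|Pyp] : Phi y = 0 \/ 0 < Phi y.
    by have := Pge0 y; rewrite le_eqVlt => /orP[/eqP ->|->]; [left|right].
  - left; have y0 := PhiZ y Py0; subst y; split => //; split => //.
    by apply/rowP => i; rewrite /grad !mxE; apply: DZ.2.
  - right; split => //; have [_ D] := @diff_pos R d Phi q y Pyp (Pdiff y).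
    by apply/rowP => i; rewrite /grad !mxE D.
have Dif : forall x, differentiable Psi x.
  move=> x; have [Px0|Pxp] : Phi x = 0 \/ 0 < Phi x.
    by have := Pge0 x; rewrite le_eqVlt => /orP[/eqP ->|->]; [left|right].
  - by rewrite (PhiZ x Px0); apply: DZ.1.
  - exact: (@diff_pos R d Phi q x Pxp (Pdiff x)).1.
split => //; split.
  have [[_ [_ ->]] //|[P0 _]] := gradlem 0.
  by move: P0; rewrite Phi0 ltxx.
set C := Cst q c1 c2 L2.
have C0 : 0 < C.
  rewrite /C /Cst.
  have t1 : 0 < c2 `^ q by rewrite powR_gt0.
  have t2 : 0 <= q * c1 `^ (q - 1) * (L2 / 2).
    by rewrite !mulr_ge0 ?powR_ge0 // ?(ltW q0) //; lra.
  have t3 : 0 <= Kc c2 L2 `^ q by rewrite powR_ge0.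
  have t4 : 0 <= q * Num.sqrt (2 * L2 * c2 `^ (2 * q - 1)).
    by rewrite mulr_ge0 ?sqrtr_ge0 // ltW.
  lra.
exists (q * eta), (p * C); split.
- by rewrite mulr_gt0.
- by rewrite mulr_gt0 //; lra.
- by [].
move=> x y.
have LpE : p * C / p = C by field; rewrite gt_eqF //; lra.
rewrite LpE.
split.
- set z := x - xstar; have [lo hi] := Phib z.
  have ez := enorm_ge0 z.
  rewrite /a1 /a2 /Psi -p2q -!sqpow // -!powRM ?sqr_ge0 ?(ltW c10) ?(ltW c20) //.
  split; apply: ge0_ler_powR; rewrite ?nnegrE ?Pge0 ?mulr_ge0 ?sqr_ge0 ?(ltW c10) ?(ltW c20) ?(ltW q0) ?p0w //.
- have [[z0 [Pz0 ->]]|[Pzp ->]] := gradlem (x - xstar).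
    have xe : x = xstar by apply/subr0_eq.
    by rewrite xe Hfix subrr dotp0r /Psi Phi0 powR0 ?mulr0 // gt_eqF.
  rewrite dotpZl /Psi.
  have hD := Hdrift x.
  set t := Phi (x - xstar) in Pzp hD *.
  have k0 : 0 <= q * t `^ (q - 1) by rewrite mulr_ge0 ?powR_ge0 // ltW.
  apply: le_trans (ler_wpM2l k0 hD) _.
  rewrite -(mulr_powRB1 (ltW Pzp) q0).
  by rewrite le_eqVlt; apply/orP; left; apply/eqP; ring.
- have [[y0 [Py0 ->]]|[Pyp ->]] := gradlem y.
    rewrite y0 subr0 dotp0l addr0 /Psi Phi0 powR0 ?gt_eqF // add0r.
    have [_ hi] := Phib x; have ex := enorm_ge0 x.
    apply: (@le_trans _ _ ((c2 * enorm x ^+ 2) `^ q)).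
      by apply: ge0_ler_powR; rewrite ?nnegrE ?Pge0 ?mulr_ge0 ?sqr_ge0 ?(ltW c20) ?(ltW q0).
    rewrite powRM ?sqr_ge0 ?(ltW c20) // sqpow // p2q ler_wpM2r ?powR_ge0 //.
    rewrite /C /Cst -!addrA lerDl.
    have t2 : 0 <= q * c1 `^ (q - 1) * (L2 / 2).
      by rewrite !mulr_ge0 ?powR_ge0 // ?(ltW q0) //; lra.
    have t3 : 0 <= Kc c2 L2 `^ q by rewrite powR_ge0.
    have t4 : 0 <= q * Num.sqrt (2 * L2 * c2 `^ (2 * q - 1)).
      by rewrite mulr_ge0 ?sqrtr_ge0 // ltW.
    lra.
  rewrite dotpZl /Psi -p2q.
  set gv := grad Phi y.
  have [lo hi] := Phib y.
  have gb : enorm gv ^+ 2 <= 2 * L2 * Phi y.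
    have := Hsmooth y (y - L2^-1 *: gv).
    have -> : y - L2^-1 *: gv - y = - (L2^-1 *: gv) by rewrite addrAC subrr add0r.
    rewrite -/gv.
    set D := enorm gv ^+ 2.
    move=> h; have h0 := Pge0 (y - L2^-1 *: gv).
    have E : Phi y + dotp gv (- (L2^-1 *: gv)) + L2 / 2 * (enorm (- (L2^-1 *: gv))) ^+ 2
            = Phi y - D / (2 * L2).
      rewrite enorm_sqr !dotpNr !dotpNl !dotpZr !dotpZl -enorm_sqr -/D.
      by field; rewrite gt_eqF.
    rewrite E in h.
    have : D / (2 * L2) <= Phi y by lra.
    by rewrite ler_pdivrMr ?mulr_gt0 // mulrC.
  apply: (@key_real R q c1 c2 L2 (Phi y) (Phi x) (enorm y) (enorm (x - y))
            (dotp gv (x - y)) (enorm gv)) => //.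
  all: try exact: Pge0.
  all: try exact: enorm_ge0.
  all: try exact: Hsmooth.
  all: try exact: CSabs.
  all: try exact: ltW.
Qed.
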